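(* Let $X$ be a topological space, $\Delta$ a partition of $X$, $Y=X/\Delta$ with the quotient topology, and $p:X\to Y$ the quotient map. The following are equivalent: (1) $p$ is a locally trivial fibration; (2) the partition $\Delta$ is locally trivial and $p$ is an open map.
   Context: The partition $\Delta$ is locally trivial if for each $\omega\in\Delta$ there exist an open neighborhood $U$ of $\omega$, a topological space $J$, a point $t_0\in J$ and a homeomorphism $\phi:\omega\times J\to U$ such that $\phi(\omega\times\{t\})$ is an element of $\Delta$ for all $t\in J$ and $\phi(x,t_0)=x$ for all $x\in\omega$. The map $p$ is a locally trivial fibration if each $y\in Y$ has an open neighborhood $V$ and a homeomorphism $p^{-1}(V)\cong F\times V$ (for some space $F$) under which $p$ corresponds to the projection onto $V$. *)

(* Defs.v *)
From mathcomp Require Import all_boot all_order.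
From mathcomp Require Import all_classical topology.
Set Implicit Arguments. Unset Strict Implicit. Unset Printing Implicit Defensive.
Local Open Scope classical_set_scope.

Definition is_partition (X : Type) (D : set (set X)) : Prop :=
  (forall w, D w -> w !=set0) /\
  (forall x : X, exists2 w, D w & w x) /\
  (forall w1 w2, D w1 -> D w2 -> w1 `&` w2 !=set0 -> w1 = w2).

(* p : X -> Y is (up to homeomorphism, i.e. is) the quotient map X -> X/D:
   p is surjective, its fibres are exactly the blocks of D, and Y carries
   the quotient topology. *)
Definition is_quotient_map_of (X Y : topologicalType) (D : set (set X))
    (p : X -> Y) : Prop :=
  (forall y : Y, exists x, p x = y) /\
  (forall y : Y, D (p @^-1` [set y])) /\
  (forall w, D w -> exists y, w = p @^-1` [set y]) /\
  (forall V : set Y, open V <-> open (p @^-1` V)).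

Definition subspace_homeo (S T : topologicalType) (A : set S) (B : set T)
    (f : S -> T) (g : T -> S) : Prop :=
  (forall a, A a -> B (f a)) /\ (forall b, B b -> A (g b)) /\
  (forall a, A a -> g (f a) = a) /\ (forall b, B b -> f (g b) = b) /\
  {within A, continuous f} /\ {within B, continuous g}.

Definition locally_trivial_partition (X : topologicalType) (D : set (set X)) :
    Prop :=
  forall w, D w ->
  exists U : set X, open U /\ w `<=` U /\
  exists (J : topologicalType) (t0 : J) (phi : X * J -> X) (psi : X -> X * J),
    subspace_homeo (w `*` setT) U phi psi /\
    (forall t : J, D (phi @` (w `*` [set t]))) /\
    (forall x, w x -> phi (x, t0) = x).

Definition locally_trivial_fibration (X Y : topologicalType) (p : X -> Y) :
    Prop :=
  forall y : Y, exists V : set Y, open V /\ V y /\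
  exists (F : topologicalType) (h : X -> F * Y) (k : F * Y -> X),
    subspace_homeo (p @^-1` V) (setT `*` V) h k /\
    (forall x, (p @^-1` V) x -> (h x).2 = p x).

Definition open_map (X Y : topologicalType) (p : X -> Y) : Prop :=
  forall A : set X, open A -> open (p @` A).

(* Main.v *)
Require Import Defs.
From mathcomp Require Import all_boot all_order all_classical topology.
Local Open Scope classical_set_scope.

Lemma cont_fst (A B : topologicalType) : continuous (@fst A B).
Proof. by move=> [a b]; exact: cvg_fst. Qed.
Lemma cont_snd (A B : topologicalType) : continuous (@snd A B).
Proof. by move=> [a b]; exact: cvg_snd. Qed.
Lemma cont_pair (S A B : topologicalType) (f : S -> A) (g : S -> B) :
  continuous f -> continuous g -> continuous (fun x => (f x, g x)).
Proof. by move=> cf cg x; apply: cvg_pair; [exact: cf|exact: cg]. Qed.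

Lemma within_openP (S T : topologicalType) (A : set S) (f : S -> T) :
  {within A, continuous f} <->
  forall O, open O -> exists2 W, open W & W `&` A = f @^-1` O `&` A.
Proof.
rewrite continuousP; split => H O oO.
  by apply/open_subspaceP; exact: (H O oO).
by apply/open_subspaceP; exact: H.
Qed.

Lemma within_comp (R S T : topologicalType) (A : set R) (B : set S)
  (f : R -> S) (g : S -> T) : (forall a, A a -> B (f a)) ->
  {within A, continuous f} -> {within B, continuous g} ->
  {within A, continuous (g \o f)}.
Proof.
move=> AB /within_openP cf /within_openP cg; apply/within_openP => O oO.
have [W oW eW] := cg O oO; have [W' oW' eW'] := cf W oW.
exists W' => //; rewrite eW'; apply/seteqP; split => a [Ha Aa]; split => //.
- have : (W `&` B) (f a) by split => //; exact: AB.
  by rewrite eW => -[].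
- have : (g @^-1` O `&` B) (f a) by split => //; exact: AB.
  by rewrite -eW => -[].
Qed.

Lemma within_pair (S A B : topologicalType) (D : set S) (f : S -> A) (g : S -> B) :
  {within D, continuous f} -> {within D, continuous g} ->
  {within D, continuous (fun x => (f x, g x))}.
Proof.
move=> /subspace_sigL_continuousP cf /subspace_sigL_continuousP cg.
apply/subspace_sigL_continuousP; exact: (@cont_pair _ _ _ (sigL D f) (sigL D g) cf cg).
Qed.

Lemma within_ext (S T : topologicalType) (A : set S) (f g : S -> T) :
  (forall a, A a -> f a = g a) ->
  {within A, continuous f} -> {within A, continuous g}.
Proof.
move=> fg /within_openP cf; apply/within_openP => O oO.
have [W oW eW] := cf O oO; exists W => //; rewrite eW.
by apply/seteqP; split => a [Ha Aa]; split => //=; rewrite ?fg // -fg.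
Qed.

Lemma within_glob (S T : topologicalType) (A : set S) (f : S -> T) :
  continuous f -> {within A, continuous f}.
Proof. exact: continuous_subspaceT. Qed.

Lemma within_sub (S T : topologicalType) (A : set S) (V : set T) (f : S -> V) :
  {within A, continuous (set_val \o f)} -> {within A, continuous f}.
Proof.
move=> /subspace_sigL_continuousP c; apply/subspace_sigL_continuousP.
exact: continuous_comp_initial.
Qed.

Lemma cont_val (T : topologicalType) (V : set T) : continuous (@set_val T V).
Proof. exact: initial_continuous. Qed.

Lemma cont_id (T : topologicalType) : continuous (fun x : T => x).
Proof. by move=> x; exact: cvg_id. Qed.

Lemma within_post (S T U : topologicalType) (A : set S) (f : S -> T) (g : T -> U) :
  {within A, continuous f} -> continuous g -> {within A, continuous (g \o f)}.
Proof.
move=> cf cg; apply: (@within_comp _ _ _ A setT) => //; exact: within_glob.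
Qed.

Lemma sv_inj (T : Type) (A : set T) (a b : A) : set_val a = set_val b -> a = b.
Proof. by move=> e; apply: eq_sig_hprop => // x u v; exact: Prop_irrelevance. Qed.

Arguments within_post {S T U A f g}.
Arguments within_glob {S T A f}.
Arguments within_pair {S A B D f g}.
Arguments within_sub {S T A V f}.
Arguments within_ext {S T A f g}.

Lemma dir1 (X Y : topologicalType) (D : set (set X)) (p : X -> Y) :
  is_partition D -> is_quotient_map_of D p ->
  locally_trivial_fibration p ->
   (locally_trivial_partition D /\ open_map p).
Proof.
move=> [hne [hcov hdisj]] [hsurj [hfib [hblk hopen]]] fib.
have pc : continuous p by apply/continuousP => O oO; exact/(hopen O).1.
split; last first.
  move=> A oA; rewrite openE => _ [a Aa <-].
  have [V [oV [Vy [F [h [k [[hAB [kBA [kh [hk [ch ck]]]]] h2]]]]]]] := fib (p a).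
  have oA' : open (A `&` p @^-1` V) by apply: openI => //; exact/(hopen V).1.
  have [W oW eW] := (within_openP _ _ _ _).1 ck _ oA'.
  pose f0 := (h a).1.
  have ha : h a = (f0, p a).
    by rewrite /f0 -h2 //; case: (h a).
  rewrite /interior nbhsE; exists ((fun z => (f0, z)) @^-1` W `&` V).
    split; last split => //=.
    - apply: openI => //; move/continuousP: (@cont_pair _ _ _ _ _ (@cst_continuous _ _ f0) (@cont_id Y)).
      by apply.
    - have : (k @^-1` (A `&` p @^-1` V) `&` setT `*` V) (h a).
        by split; [rewrite /= kh //|exact: hAB].
      by rewrite -eW ha => -[].
  move=> z [Wz Vz].
  have : (W `&` setT `*` V) (f0, z) by [].
  rewrite eW => -[[Ak _] _]; exists (k (f0, z)) => //.
  by rewrite -h2 ?hk //; exact: kBA.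
move=> w Dw; have [y ew] := hblk w Dw; subst w.
have [V [oV [Vy [F [h [k [[hAB [kBA [kh [hk [ch ck]]]]] h2]]]]]]] := fib y.
exists (p @^-1` V); split; first exact/(hopen V).1.
split; first by move=> x /= ->.
pose t0 : V := exist _ y (mem_set Vy).
pose jof (z : Y) : set_type V :=
  match pselect (V z) with left Hz => exist _ z (mem_set Hz) | right _ => t0 end.
have jofE z : V z -> set_val (jof z) = z.
  by move=> Vz; rewrite /jof; case: pselect.
have jofV (t : set_type V) : jof (set_val t) = t.
  by apply: sv_inj; apply: jofE; exact: set_valP.
have tV (t : set_type V) : V (set_val t) by exact: set_valP.
have K1 b : (setT `*` V) b -> p (k b) = b.2.
  by move=> Hb; rewrite -h2 ?hk //; exact: kBA.
have K3 u : V (p u) -> k ((h u).1, p u) = u.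
  by move=> Vu; rewrite -h2 //; case E: (h u) => [a b] /=; rewrite -E kh.
have K2 x : p x = y -> k ((h x).1, y) = x.
  by move=> px; rewrite -{1}px K3 // px.
pose phi (q : X * set_type V) := k ((h q.1).1, set_val q.2).
pose psi (u : X) := (k ((h u).1, y), jof (p u)).
have phiE x t : p (phi (x, t)) = set_val t by rewrite /phi K1 //; split => //; exact: tV.
exists (set_type V), t0, phi, psi.
split; last split.
- split; first by move=> [x t] [/= wx _]; rewrite /= phiE.
  split; first by move=> u Vu; split => //=; rewrite K1.
  split.
    move=> [x t] [/= wx _]; rewrite /psi /phi /= hk; last by split => //; first [exact: tV | exact: Vy].
    by rewrite /= K2 // -/(phi (x, t)) phiE jofV.
  split.
    move=> u /= Vu; rewrite /phi /psi /= hk; last by split => //; first [exact: tV | exact: Vy].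
    by rewrite /= jofE // K3.
  split.
  + have -> : phi = k \o (fun q => ((h q.1).1, set_val q.2)) by [].
    apply: (@within_comp _ _ _ _ (setT `*` V)).
    * by move=> [x t] _; split => //; exact: tV.
    * apply: within_pair.
        apply: (@within_comp _ _ _ _ (p @^-1` V) fst (fun x => (h x).1)).
        - by move=> [x t] [/= -> _].
        - exact: within_glob (@cont_fst _ _).
        - exact: (within_post ch (@cont_fst _ _)).
      apply: within_glob => q.
      exact: (continuous_comp (@cont_snd _ _ q) (@cont_val _ V _)).
    * exact: ck.
  + apply: within_pair.
      have -> : (fun u => k ((h u).1, y)) = k \o (fun u => ((h u).1, y)) by [].
      apply: (@within_comp _ _ _ _ (setT `*` V)) => //.
      by apply: within_pair; [exact: (within_post ch (@cont_fst _ _))|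
        exact: within_glob (@cst_continuous _ _ _)].
    apply: within_sub.
    apply: (within_ext (f := p)); last exact: within_glob.
    by move=> u Vu /=; rewrite jofE.
- move=> t; rewrite (_ : _ @` _ = p @^-1` [set set_val t]); first exact: hfib.
  apply/seteqP; split.
    by move=> _ [[x t'] [/= wx ->] <-]; rewrite /= phiE.
  move=> u /= put; have Vu : V (p u) by rewrite put.
  exists (k ((h u).1, y), t).
    by split => //=; rewrite K1.
  by rewrite /phi /= hk; [rewrite /= -put K3|split].
- by move=> x /= px; rewrite /phi /= K2.
Qed.

Lemma dir2 (X Y : topologicalType) (D : set (set X)) (p : X -> Y) :
  is_partition D -> is_quotient_map_of D p ->
  (locally_trivial_partition D /\ open_map p) ->
  locally_trivial_fibration p.
Proof.
move=> [hne [hcov hdisj]] [hsurj [hfib [hblk hopen]]] [LT om] y.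
have pc : continuous p by apply/continuousP => O oO; exact/(hopen O).1.
have [x0 px0] := hsurj y.
pose w := p @^-1` [set y].
have wx0 : w x0 by [].
have [U [oU [wU [J [t0 [phi [psi [[pA [pB [pK1 [pK2 [cphi cpsi]]]]] [slice base]]]]]]]]] :=
  LT w (hfib y).
pose V := p @` U.
have F1 u : U u -> w (psi u).1 by move=> Uu; have [] := pB u Uu.
have Fconst x x' t : w x -> w x' -> p (phi (x, t)) = p (phi (x', t)).
  move=> wx wx'; have [z E] := hblk _ (slice t).
  have : (phi @` (w `*` [set t])) (phi (x, t)) by exists (x, t).
  have : (phi @` (w `*` [set t])) (phi (x', t)) by exists (x', t).
  by rewrite E /= => -> ->.
have F4 u : U u -> p @^-1` [set p u] = phi @` (w `*` [set (psi u).2]).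
  move=> Uu; apply: hdisj; [exact: hfib|exact: slice|].
  exists u; split => //; exists (psi u); last exact: pK2.
  by split => //; exact: F1.
have Fsat u x : U u -> p x = p u -> U x.
  move=> Uu pxu; have : (p @^-1` [set p u]) x by [].
  rewrite F4 // => -[q [wq _] <-]; apply: pA; by split.
have F5 u u' : U u -> p u' = p u -> psi u' = ((psi u').1, (psi u).2).
  move=> Uu pu; have : (p @^-1` [set p u]) u' by [].
  by rewrite F4 // => -[[x t] [/= wx ->] <-]; rewrite pK1.
have EU : p @^-1` V = U.
  apply/seteqP; split; last by move=> u Uu; exists u.
  by move=> x [u Uu pux]; apply: (Fsat u).
pose s (z : Y) := xget x0 [set u | U u /\ p u = z].
pose jinv (z : Y) := (psi (s z)).2.
have Fj u : U u -> jinv (p u) = (psi u).2.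
  move=> Uu; have [Us ps] : U (s (p u)) /\ p (s (p u)) = p u.
    by have := @xgetPex _ x0 [set v | U v /\ p v = p u]; apply; exists u.
  by rewrite /jinv (F5 u (s (p u)) Uu ps).
pose fof (x : X) : set_type w :=
  match pselect (w x) with left Hx => exist _ x (mem_set Hx)
  | right _ => exist _ x0 (mem_set wx0) end.
have fofE x : w x -> set_val (fof x) = x by move=> wx; rewrite /fof; case: pselect.
have fofV (f : set_type w) : fof (set_val f) = f.
  by apply: sv_inj; apply: fofE; exact: set_valP.
have fw (f : set_type w) : w (set_val f) by exact: set_valP.
pose h (x : X) := (fof (psi x).1, p x).
pose k (q : set_type w * Y) := phi (set_val q.1, jinv q.2).
have jinvc : {within V, continuous jinv}.
  apply/within_openP => O oO.
  have oO' : open (setT `*` O : set (X * J)).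
    have -> : setT `*` O = snd @^-1` O :> set (X * J).
      by apply/seteqP; split => q /=; [case|split].
    by move/continuousP: (@cont_snd X J); apply.
  have [W0 oW0 eW0] := (within_openP _ _ _ _).1 cpsi _ oO'.
  exists (p @` (W0 `&` U)); first by apply: om; exact: openI.
  apply/seteqP; split.
    move=> _ [[a [W0a Ua] <-] Vz]; split => //=.
    have : (psi @^-1` (setT `*` O) `&` U) a by rewrite -eW0.
    by rewrite Fj // => -[[]].
  move=> z [/= jO [u Uu puz]]; subst z; split; last by exists u.
  exists u => //.
  have : (psi @^-1` (setT `*` O) `&` U) u.
    by split => //; split => //=; rewrite -Fj.
  by rewrite -eW0.
exists V; split; first exact: om.
split; first by exists x0 => //; exact: wU.
exists (set_type w), h, k.
split; last by [].
rewrite EU; split.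
  by move=> x Ux; split => //=; exists x.
split.
  move=> [f z] _; rewrite /k /=; apply: pA; split => //=; exact: fw.
split.
  move=> x Ux; rewrite /k /h /= fofE; last exact: F1.
  rewrite Fj //.
  by case E: (psi x) => [a b]; rewrite -E pK2.
split.
  move=> [f z] [_ /= [u Uu <-]]; rewrite /k /h /= Fj // pK1; last by split => //=; exact: fw.
  rewrite /= fofV; congr pair.
  rewrite (Fconst _ (psi u).1); [|exact: fw|exact: F1].
  by rewrite -[(_, _)]surjective_pairing pK2.
split.
  apply: within_pair; last exact: within_glob.
  apply: within_sub.
  apply: (within_ext (f := fun x => (psi x).1)).
    by move=> x Ux /=; rewrite fofE //; exact: F1.
  exact: within_post cpsi (@cont_fst _ _).
have -> : k = phi \o (fun q => (set_val q.1, jinv q.2)) by [].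
apply: (@within_comp _ _ _ _ (w `*` setT)).
- by move=> [f z] _; split => //=; exact: fw.
- apply: within_pair.
    apply: within_glob => q.
    exact: (continuous_comp (@cont_fst _ _ q) (@cont_val _ w _)).
  apply: (@within_comp _ _ _ _ V snd jinv) => //.
    by move=> [f z] [].
  exact: within_glob (@cont_snd _ _).
- exact: cphi.
Qed.

Theorem lemma3p3 (X Y : topologicalType) (D : set (set X)) (p : X -> Y) :
  is_partition D -> is_quotient_map_of D p ->
  (locally_trivial_fibration p <->
   (locally_trivial_partition D /\ open_map p)).
Proof.
move=> hP hQ; split; [exact: dir1 | exact: dir2].
Qed.
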